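(* Let $\mathcal H=\mathbb C^5$ with orthonormal basis $\{|i\rangle\}_{i=0}^4$, $|\pm\rangle=(|0\rangle\pm|1\rangle)/\sqrt2$, and $a\in(0,1)$. Define $E_1=|2\rangle\langle2|+a|0\rangle\langle0|+(1-a)|+\rangle\langle+|$, $E_2=|3\rangle\langle3|+a|1\rangle\langle1|$, $E_3=|4\rangle\langle4|+(1-a)|-\rangle\langle-|$. Then $\{E_1,E_2,E_3\}$ is a non-commutative POVM (e.g. $E_2E_3\neq E_3E_2$), yet each $E_k$ is a fixed point of the Heisenberg-picture entanglement breaking channel $\Lambda^*(A)=\sum_{z=1}^3\mathrm{tr}[A\,|z+1\rangle\langle z+1|]E_z$; hence $\{E_k\}$ does not allow for a proof of contextuality of quantum theory.
   Context: A set of observables $\mathcal A$ does not allow for a proof of contextuality of quantum theory if there exist a POVM $\{G_\lambda\}$ and states $\{\sigma_\lambda\}$ (finite index set) with $A_k=\sum_\lambda\mathrm{tr}[\sigma_\lambda A_k]G_\lambda$ for all $\{A_k\}\in\mathcal A$ and all $k$. *)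

(* Defs.v *)
From HB Require Import structures.
From mathcomp Require Import all_boot all_order all_algebra.
From mathcomp Require Import complex.
From mathcomp Require Import reals.
Set Implicit Arguments. Unset Strict Implicit. Unset Printing Implicit Defensive.
Import Order.TTheory GRing.Theory Num.Theory.
Local Open Scope ring_scope.
Local Open Scope complex_scope.

Section QDefs.
Context {C : numClosedFieldType}.

Definition adj {m n} (A : 'M[C]_(m, n)) : 'M[C]_(n, m) := map_mx Num.conj (A^T).

Definition psd {d} (A : 'M[C]_d) : Prop :=
  adj A = A /\ forall v : 'cV[C]_d, 0 <= (adj v *m A *m v) 0 0.

Definition POVM {d} {I : finType} (E : I -> 'M[C]_d) : Prop :=
  (forall i, psd (E i)) /\ \sum_(i : I) E i = 1%:M.

Definition qstate {d} (s : 'M[C]_d) : Prop := psd s /\ \tr s = 1.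

(* A set of observables (indexed by J, the j-th being a POVM {A j k}_k with
   outcomes in K j) does NOT allow for a proof of contextuality iff there are
   a POVM {G_l} and states {s_l} with a finite index set such that
   A_k = sum_l tr[s_l A_k] G_l for every observable and every outcome k. *)
Definition no_contextuality_proof {d} {J : Type} (K : J -> finType)
    (A : forall j, K j -> 'M[C]_d) : Prop :=
  exists (L : nat) (G : 'I_L -> 'M[C]_d) (s : 'I_L -> 'M[C]_d),
    POVM G /\ (forall l, qstate (s l)) /\
    forall j (k : K j), A j k = \sum_(l < L) \tr (s l *m A j k) *: G l.

Definition ket {d} (i : 'I_d) : 'cV[C]_d := delta_mx i 0.
Definition proj {d} (v : 'cV[C]_d) : 'M[C]_d := v *m adj v.

End QDefs.

Section Example.
Variable R : realType.
Local Notation C := (complex R : numClosedFieldType).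

Definition k5 (i : nat) : 'cV[C]_5 := ket (inord i : 'I_5).
Definition ketp : 'cV[C]_5 := (Num.sqrt (2 : R))^-1%:C *: (k5 0 + k5 1).
Definition ketm : 'cV[C]_5 := (Num.sqrt (2 : R))^-1%:C *: (k5 0 - k5 1).

Definition E1 (a : R) : 'M[C]_5 :=
  proj (k5 2) + a%:C *: proj (k5 0) + (1 - a)%:C *: proj ketp.
Definition E2 (a : R) : 'M[C]_5 := proj (k5 3) + a%:C *: proj (k5 1).
Definition E3 (a : R) : 'M[C]_5 := proj (k5 4) + (1 - a)%:C *: proj ketm.

(* E_k indexed by 'I_3: index z (0,1,2) stands for E_{z+1} *)
Definition Efam (a : R) (z : 'I_3) : 'M[C]_5 :=
  if val z == 0%N then E1 a else if val z == 1%N then E2 a else E3 a.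

Definition LambdaH (a : R) (A : 'M[C]_5) : 'M[C]_5 :=
  \sum_(z < 3) \tr (A *m proj (k5 (z.+2))) *: Efam a z.
End Example.

(* Main.v *)
Require Import Defs.
From HB Require Import structures.
From mathcomp Require Import all_boot all_order all_algebra.
From mathcomp Require Import complex.
From mathcomp Require Import reals ring.
Import Order.TTheory GRing.Theory Num.Theory.
Local Open Scope ring_scope.
Local Open Scope complex_scope.

Section S.
Variable R : realType.
Local Notation C := (R[i] : numClosedFieldType).

Definition cc : C := (Num.sqrt (2 : R))^-1%:C.

Lemma cc_conj : Num.conj cc = cc.
Proof. exact: conjc_real. Qed.

Lemma cc2 : cc * cc = 2^-1.
Proof.
rewrite /cc -rmorphM /= -invfM -expr2 sqr_sqrtr ?ler0n //.
by rewrite fmorphV /= rmorph_nat.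
Qed.

Lemma projE d (v : 'cV[C]_d) i j : proj v i j = v i 0 * (v j 0)^*.
Proof. by rewrite /proj /adj !mxE big_ord1 !mxE. Qed.

Lemma k5E n (i : 'I_5) : (n < 5)%N -> k5 R n i 0 = (val i == n)%:R.
Proof. by move=> hn; rewrite /k5 /ket mxE /= andbT -val_eqE /= inordK. Qed.

Lemma pk5E n (i j : 'I_5) : (n < 5)%N -> proj (k5 R n) i j = ((val i == n) && (val j == n))%:R.
Proof. move=> hn; rewrite projE !k5E // rmorph_nat; by case: (val i == n); case: (val j == n); rewrite ?mulr1 ?mulr0. Qed.

Lemma ieq n (i : 'I_5) : (n < 5)%N -> (i == inord n) = (val i == n).
Proof. by move=> hn; rewrite -val_eqE /= inordK. Qed.

Lemma pketpE (i j : 'I_5) : proj (ketp R) i j =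
   2^-1 * (((val i == 0%N) || (val i == 1%N)) && ((val j == 0%N) || (val j == 1%N)))%:R.
Proof.
rewrite projE /ketp !mxE !andbT !ieq // -/cc rmorphM /= cc_conj.
rewrite mulrCA !mulrA cc2 -mulrA; congr (_ * _).
case: i j => [[|[|i]] hi] [[|[|j]] hj] /=; rewrite ?rmorphD /= ?rmorph_nat;
  simpl; rewrite ?addr0 ?add0r ?mulr1 ?mul1r ?mulr0 ?mul0r //.
Qed.

Lemma pketmE (i j : 'I_5) : proj (ketm R) i j =
   2^-1 * (((val i == 0%N)%:R - (val i == 1%N)%:R) * ((val j == 0%N)%:R - (val j == 1%N)%:R)).
Proof.
rewrite projE /ketm !mxE !andbT !ieq // -/cc rmorphM /= cc_conj.
rewrite rmorphB /= !rmorph_nat -cc2; ring.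
Qed.

Lemma conjR (x : R) : Num.conj (x%:C : C) = x%:C.
Proof. exact: conjc_real. Qed.

Lemma adjK m n (A : 'M[C]_(m, n)) : adj (adj A) = A.
Proof. by apply/matrixP=> i j; rewrite /adj !mxE conjCK. Qed.

Lemma adjM m n p (A : 'M[C]_(m, n)) (B : 'M[C]_(n, p)) : adj (A *m B) = adj B *m adj A.
Proof. by rewrite /adj trmx_mul map_mxM. Qed.

Lemma adjD m n (A B : 'M[C]_(m, n)) : adj (A + B) = adj A + adj B.
Proof. by apply/matrixP=> i j; rewrite /adj !mxE rmorphD. Qed.

Lemma adjZ m n (x : R) (A : 'M[C]_(m, n)) : adj (x%:C *: A) = x%:C *: adj A.
Proof. by apply/matrixP=> i j; rewrite /adj !mxE rmorphM /= conjR. Qed.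

Lemma psd_proj d (v : 'cV[C]_d) : psd (proj v).
Proof.
split; first by rewrite /proj adjM adjK.
move=> w; rewrite /proj !mulmxA -(mulmxA (adj w *m v)).
rewrite mxE big_ord1.
have -> : (adj v *m w) 0 0 = Num.conj ((adj w *m v) 0 0).
  rewrite !mxE rmorph_sum; apply: eq_bigr => k _; by rewrite /adj !mxE rmorphM /= conjCK mulrC.
exact: mul_conjC_ge0.
Qed.

Lemma psdD d (A B : 'M[C]_d) : psd A -> psd B -> psd (A + B).
Proof.
move=> [hA fA] [hB fB]; split; first by rewrite adjD hA hB.
by move=> v; rewrite mulmxDr mulmxDl mxE addr_ge0.
Qed.

Lemma psdZ d (x : R) (A : 'M[C]_d) : 0 <= x -> psd A -> psd (x%:C *: A).
Proof.
move=> hx [hA fA]; split; first by rewrite adjZ hA.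
move=> v; rewrite -scalemxAr -scalemxAl mxE mulr_ge0 //.
by rewrite lecR.
Qed.

Lemma maddE m n (A B : 'M[C]_(m, n)) i j : (A + B) i j = A i j + B i j.
Proof. by rewrite mxE. Qed.
Lemma mscaleE m n (x : C) (A : 'M[C]_(m, n)) i j : (x *: A) i j = x * A i j.
Proof. by rewrite mxE. Qed.

Lemma E1E (a : R) (i j : 'I_5) : E1 a i j = ((val i == 2%N) && (val j == 2%N))%:R
  + a%:C * ((val i == 0%N) && (val j == 0%N))%:R
  + (1 - a%:C) * (2^-1 * (((val i == 0%N) || (val i == 1%N)) && ((val j == 0%N) || (val j == 1%N)))%:R).
Proof. by rewrite /E1 !(maddE, mscaleE) !pk5E // pketpE rmorphB rmorph1. Qed.

Lemma E2E (a : R) (i j : 'I_5) : E2 a i j = ((val i == 3%N) && (val j == 3%N))%:R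
  + a%:C * ((val i == 1%N) && (val j == 1%N))%:R.
Proof. by rewrite /E2 !(maddE, mscaleE) !pk5E. Qed.

Lemma E3E (a : R) (i j : 'I_5) : E3 a i j = ((val i == 4%N) && (val j == 4%N))%:R
  + (1 - a%:C) * (2^-1 * (((val i == 0%N)%:R - (val i == 1%N)%:R) * ((val j == 0%N)%:R - (val j == 1%N)%:R))).
Proof. by rewrite /E3 !(maddE, mscaleE) pk5E // pketmE rmorphB rmorph1. Qed.

Lemma sumE0 (a : R) (M1 M2 M3 : 'M[C]_5) :
  (forall i j, M1 i j = ((val i == 2%N) && (val j == 2%N))%:R
  + a%:C * ((val i == 0%N) && (val j == 0%N))%:R
  + (1 - a%:C) * (2^-1 * (((val i == 0%N) || (val i == 1%N)) && ((val j == 0%N) || (val j == 1%N)))%:R)) ->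
  (forall i j, M2 i j = ((val i == 3%N) && (val j == 3%N))%:R
  + a%:C * ((val i == 1%N) && (val j == 1%N))%:R) ->
  (forall i j, M3 i j = ((val i == 4%N) && (val j == 4%N))%:R
  + (1 - a%:C) * (2^-1 * (((val i == 0%N)%:R - (val i == 1%N)%:R) * ((val j == 0%N)%:R - (val j == 1%N)%:R)))) ->
  M1 + (M2 + (M3 + 0)) = 1%:M.
Proof.
move=> h1 h2 h3; rewrite addr0; apply/matrixP => i j; rewrite !maddE h1 h2 h3 mxE.
case: i => [[|[|[|[|[|?]]]]] ?]; case: j => [[|[|[|[|[|?]]]]] ?] //=; field; rewrite ?pnatr_eq0 //.
Qed.

Lemma trpE d (A : 'M[C]_d) (i : 'I_d) : \tr (A *m proj (ket i)) = A i i.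
Proof.
have ue : forall l : 'I_d, (ket i : 'cV[C]_d) l 0 = (l == i)%:R.
  by move=> l; rewrite /ket mxE andbT.
rewrite /mxtrace (bigD1 i) //= big1 ?addr0.
  rewrite mxE (bigD1 i) //= big1 ?addr0.
    by rewrite projE !ue eqxx /= mul1r conjC1 mulr1.
  by move=> l /negbTE hl; rewrite projE ue hl mul0r mulr0.
move=> k /negbTE hk; rewrite mxE big1 // => l _.
by rewrite projE !ue hk rmorph0 !mulr0.
Qed.

Lemma tr1 d (i : 'I_d) : \tr (proj (ket i) : 'M[C]_d) = 1.
Proof. by rewrite -(mul1mx (proj _)) trpE mxE eqxx. Qed.

Lemma noncomm0 (a : R) (M2 M3 : 'M[C]_5) : 0 < a -> a < 1 ->
  (forall i j, M2 i j = ((val i == 3%N) && (val j == 3%N))%:R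
  + a%:C * ((val i == 1%N) && (val j == 1%N))%:R) ->
  (forall i j, M3 i j = ((val i == 4%N) && (val j == 4%N))%:R
  + (1 - a%:C) * (2^-1 * (((val i == 0%N)%:R - (val i == 1%N)%:R) * ((val j == 0%N)%:R - (val j == 1%N)%:R)))) ->
  M2 *m M3 != M3 *m M2.
Proof.
move=> ha0 ha1 h2 h3; apply/eqP => /matrixP/(_ (inord 1) (inord 0)).
rewrite !mxE !big_ord_recl !big_ord0 !h2 !h3 /= !inordK //=.
have key : forall x y : C, x = y -> x - y = a%:C * (1 - a%:C) * (- 2^-1) -> False.
  move=> x y -> ; rewrite subrr => /esym/eqP.
  rewrite !mulf_eq0 oppr_eq0 invr_eq0 pnatr_eq0 orbF -rmorphB /=.
  have nz : forall r : R, r != 0 -> (r%:C : C) != 0.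
    move=> r hr; apply: contra hr => /eqP h; apply/eqP; apply: complexI; rewrite h; exact: (esym (rmorph0 _)).
  by rewrite (negbTE (nz _ (lt0r_neq0 ha0))) (negbTE (nz _ _)) // subr_eq0 eq_sym lt_eqF.
move=> E; apply: (key _ _ E); field; rewrite ?pnatr_eq0 //.
Qed.

Lemma Ediag (a : R) (z w : 'I_3) : Efam a z (inord w.+2) (inord w.+2) = (z == w)%:R.
Proof.
case: z => [[|[|[|?]]] hz] //.
- have -> : Efam a (Ordinal hz) = E1 a by [].
  rewrite E1E /= !inordK; last by case: w => [[|[|[|?]]] ?].
  by case: w => [[|[|[|?]]] ?] //=; field; rewrite ?pnatr_eq0.
- have -> : Efam a (Ordinal hz) = E2 a by [].
  rewrite E2E /= !inordK; last by case: w => [[|[|[|?]]] ?].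
  by case: w => [[|[|[|?]]] ?] //=; field; rewrite ?pnatr_eq0.
- have -> : Efam a (Ordinal hz) = E3 a by [].
  rewrite E3E /= !inordK; last by case: w => [[|[|[|?]]] ?].
  by case: w => [[|[|[|?]]] ?] //=; field; rewrite ?pnatr_eq0.
Qed.

Lemma psdE (a : R) (z : 'I_3) : 0 < a -> a < 1 -> psd (Efam a z).
Proof.
move=> ha0 ha1.
have h1 : 0 <= 1 - a by rewrite subr_ge0 ltW.
case: z => [[|[|[|?]]] hz] //.
- change (psd (E1 a)); rewrite /E1.
  by apply: psdD; [apply: psdD; [exact: psd_proj | apply: psdZ; [exact: ltW|exact: psd_proj]] |
     apply: psdZ => //; exact: psd_proj].
- change (psd (E2 a)); rewrite /E2.
  by apply: psdD; [exact: psd_proj | apply: psdZ; [exact: ltW|exact: psd_proj]].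
- change (psd (E3 a)); rewrite /E3.
  by apply: psdD; [exact: psd_proj | apply: psdZ => //; exact: psd_proj].
Qed.

Lemma lamE (a : R) (z : 'I_3) : LambdaH a (Efam a z) = Efam a z.
Proof.
rewrite /LambdaH (eq_bigr (fun w => (z == w)%:R *: Efam a w)).
  rewrite (bigD1 z) //= eqxx scale1r big1 ?addr0 // => w hw.
  by rewrite eq_sym (negbTE hw) scale0r.
by move=> w _; rewrite /k5 trpE Ediag.
Qed.
End S.

Theorem mainTheorem5 (R : realType) (a : R) (ha0 : 0 < a) (ha1 : a < 1) :
  POVM (Efam a) /\
  E2 a *m E3 a != E3 a *m E2 a /\
  (forall z : 'I_3, LambdaH a (Efam a z) = Efam a z) /\
  @no_contextuality_proof (R[i] : numClosedFieldType) 5 unit (fun _ => 'I_3)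
    (fun _ => Efam a).
Proof.
have hP : POVM (Efam a).
  split; first by move=> z; exact: (@psdE R a z ha0 ha1).
  rewrite !big_ord_recl big_ord0.
  by apply: (@sumE0 R a) => i j; [exact: E1E | exact: E2E | exact: E3E].
split; first exact: hP.
split; first by apply: (@noncomm0 R a _ _ ha0 ha1) => i j; [exact: E2E | exact: E3E].
split; first exact: lamE.
exists 3%N, (Efam a), (fun l : 'I_3 => proj (k5 R l.+2)).
split; first exact: hP.
split; first by move=> l; split; [exact: psd_proj | rewrite /k5; exact: tr1].
move=> _ k; rewrite -{1}(@lamE R a k) /LambdaH; apply: eq_bigr => l _.
by rewrite mxtrace_mulC.
Qed.
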